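(* Let $L$ be a friendly labeling function, $T$ a tree with root edge, and $e$ an interior edge of $T$. If $(l_1,m,n_1)$ and $(l_2,m,n_2)$ are consistent labelings of $T$ (same label $m$ on $e$), then $(l_1,m,n_2)$ and $(l_2,m,n_1)$ are consistent labelings of $T$ and the quadratic binomial $$q_{(l_1,m,n_1)}\,q_{(l_2,m,n_2)}-q_{(l_1,m,n_2)}\,q_{(l_2,m,n_1)}$$ lies in the toric ideal $I_{T,L}$.
   Context: Let $G$ be a finite abelian group written additively, $\mathcal{L}$ a finite set, $L:G\to\mathcal{L}$ a function. A tree with root edge is a finite tree $T$ with a distinguished leaf $\rho$; the edge at $\rho$ is the root edge. Every vertex $v\neq\rho$ has a unique parent edge (first edge on the path from $v$ to $\rho$); other edges at $v$ are child edges. Vertices that are neither $\rho$ nor leaves are interior vertices; an edge is interior if both endpoints are interior vertices. $E(T)$ is the edge set. An edge $e'$ is below $e$ if $e$ lies on the path from $\rho$ to $e'$ (so $e$ is below itself). A map $h:E(T)\to G$ is a consistent assignment if for every interior vertex $v$, $h(\text{parent edge of }v)=\sum h(\text{child edges of }v)$. ${\rm im}(L^T)=\{L\circ h: h\text{ consistent}\}$ is the set of consistent labelings. $I_{T,L}$ is the kernel of $\mathbb{C}[q_\lambda:\lambda\in{\rm im}(L^T)]\to\mathbb{C}[a^{(e)}_l:e\in E(T),l\in\mathcal{L}]$, $q_\lambda\mapsto\prod_{e\in E(T)}a^{(e)}_{\lambda(e)}$. For an edge $e$, $T_{e,-}$ is the tree formed by the edges below $e$ and $T_{e,+}$ the tree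 formed by $e$ and all edges not below $e$. A labeling of $T$ is written as a triple $(l,m,n)$, where $l$ is its restriction to the edges of $T_{e,-}$ other than $e$, $m$ its value on $e$, and $n$ its restriction to the edges of $T_{e,+}$ other than $e$. Friendliness: for $m\ge3$ let $Z_m=\{(g_1,\dots,g_m)\in G^m: g_1+\cdots+g_{m-1}=g_m\}$ and $\widetilde{L}(g_1,\dots,g_m)=(L(g_1),\dots,L(g_m))$; $L$ is $m$-friendly if for every $l\in\widetilde{L}(Z_m)$ and every $i$, the set of $i$-th coordinates of elements of $\widetilde{L}^{-1}(l)$ equals $L^{-1}(l_i)$; $L$ is friendly if it is $m$-friendly for all $m\ge3$. *)

(* Defs.v *)
From mathcomp Require Import all_boot all_algebra.
From mathcomp Require Import Rstruct.
From mathcomp.real_closed Require Import complex.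
From mathcomp.multinomials Require Export mpoly.
From Stdlib Require Rdefinitions.

Set Implicit Arguments.
Unset Strict Implicit.
Unset Printing Implicit Defensive.

Import GRing.Theory.
Local Open Scope ring_scope.

Definition CC : fieldType := complex Rdefinitions.R.

(* A finite tree T with a distinguished leaf rho is encoded by its vertex   *)
(* type V, the vertex rho, and the map par : V -> V sending every vertex    *)
(* v <> rho to the other endpoint of its parent edge (the first edge on the *)
(* path from v to rho).  The edges of T are then in bijection with the      *)
(* vertices v <> rho (v <-> {v, par v}).                                    *)

Section Tree.
Variables (V : finType) (rho : V) (par : V -> V).

(* every vertex reaches rho by following parents (connected + acyclic),   *)
(* and rho is a leaf (it has exactly one neighbour).                       *)
Definition is_root_edge_tree : Prop :=
  (forall v : V, exists k, iter k par v = rho) /\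
  #|[set v : V | (v != rho) && (par v == rho)]| = 1%N.

(* the edge set E(T): the edge {v, par v} is represented by v *)
Definition edge := {v : V | v != rho}.

Definition child_edge (v : V) (e : edge) : bool := par (val e) == v.

(* interior vertex: neither rho nor a leaf, i.e. v <> rho and v has a child *)
Definition interior_vertex (v : V) : bool :=
  (v != rho) && [exists e : edge, child_edge v e].

Definition interior_edge (e : edge) : bool :=
  interior_vertex (val e) && interior_vertex (par (val e)).

(* e' is below e : e lies on the path from rho to e' (e is below itself), *)
(* In a tree the depth is < #|V|, so bounding the iteration is harmless.   *)
Definition belowb (e' e : edge) : bool :=
  [exists k : 'I_#|V|.+1, iter k par (val e') == val e].

Variable (G : finZmodType).

(* consistent assignment: at every interior vertex v (which is val e for   *)
(* its parent edge e), h(parent edge) = sum of h(child edges).             *)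
Definition consistent (h : {ffun edge -> G}) : bool :=
  [forall e : edge, interior_vertex (val e) ==>
      (h e == \sum_(f : edge | child_edge (val e) f) h f)].

Variables (Lab : finType) (L : G -> Lab).

Definition consistent_labelings : {set {ffun edge -> Lab}} :=
  [set lam | [exists h : {ffun edge -> G},
                consistent h && (lam == [ffun e => L (h e)])]].

(* splicing: the labeling (l1, m, n2) built from lam1 = (l1,m,n1) and     *)
(* lam2 = (l2,m,n2): it agrees with lam1 on T_{e,-} and with lam2 on the    *)
(* edges of T_{e,+} other than e.                                          *)
Definition splice (e : edge) (lam1 lam2 : {ffun edge -> Lab})
  : {ffun edge -> Lab} :=
  [ffun f => if belowb f e then lam1 f else lam2 f].

Definition imT := {lam : {ffun edge -> Lab} | lam \in consistent_labelings}.
Definition nq : nat := #|{: imT}|.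
Definition qvar (lam : imT) : {mpoly CC[nq]} := 'X_(enum_rank lam).

Definition na : nat := #|{: edge * Lab}|.
Definition avar (e : edge) (l : Lab) : {mpoly CC[na]} := 'X_(enum_rank (e, l)).

Definition toric_map (p : {mpoly CC[nq]}) : {mpoly CC[na]} :=
  mmap (@mpolyC na CC)
       (fun i : 'I_nq => \prod_(e : edge) avar e (val (enum_val i) e)) p.

Definition in_toric_ideal (p : {mpoly CC[nq]}) : Prop := toric_map p = 0.

End Tree.

Section Friendly.
Variables (G : finZmodType) (Lab : finType) (L : G -> Lab).

(* Z_m = {(g_1,...,g_m) : g_1 + ... + g_{m-1} = g_m}; coordinates 0..m-1 *)
Definition Zm (m : nat) (g : {ffun 'I_m -> G}) : bool :=
  \sum_(i < m | (i.+1 < m)%N) g i == \sum_(i < m | (i.+1 == m)%N) g i.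

Definition Ltilde (m : nat) (g : {ffun 'I_m -> G}) : {ffun 'I_m -> Lab} :=
  [ffun i => L (g i)].

Definition m_friendly (m : nat) : Prop :=
  forall l : {ffun 'I_m -> Lab},
    (exists g, Zm g /\ Ltilde g = l) ->
    forall (i : 'I_m) (x : G),
      (exists g, [/\ Zm g, Ltilde g = l & g i = x]) <-> L x = l i.

Definition friendly : Prop := forall m : nat, (3 <= m)%N -> m_friendly m.

End Friendly.

(* Main.v *)
Require Import Defs.
From mathcomp Require Import all_boot all_algebra.
From mathcomp.multinomials Require Import mpoly.
Set Implicit Arguments. Unset Strict Implicit. Unset Printing Implicit Defensive.
Import GRing.Theory.

Section TreeFacts.
Variables (V : finType) (rho : V) (par : V -> V).
Hypothesis Htree : is_root_edge_tree rho par.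

Definition pp (v : V) : V := if v == rho then rho else par v.

Lemma pp_rho : pp rho = rho. Proof. by rewrite /pp eqxx. Qed.
Lemma pp_par v : v != rho -> pp v = par v. Proof. by rewrite /pp => /negbTE ->. Qed.

Lemma iter_pp_rho k : iter k pp rho = rho.
Proof. exact: iter_fix pp_rho. Qed.

Lemma iter_pp_par k w : iter k pp w != rho -> iter k par w = iter k pp w.
Proof.
elim: k => [//|k IH]; rewrite !iterS => H.
have Hk : iter k pp w != rho.
  by apply: contraNneq H => ->; rewrite pp_rho.
by rewrite IH // pp_par.
Qed.

Lemma reach_pp v : exists k, iter k pp v = rho.
Proof.
case: Htree => /(_ v) [k Hk] _; exists k.
apply/eqP; apply: contraT => H; have := iter_pp_par H; rewrite Hk => E; by rewrite -E eqxx in H.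
Qed.

Definition sub (v w : V) : bool := fconnect pp w v.

Lemma subP v w : reflect (exists k, iter k pp w = v) (sub v w).
Proof.
apply: (iffP idP) => [H|[k <-]]; last exact: fconnect_iter.
by exists (findex pp w v); apply: iter_findex.
Qed.

Lemma tb_refl v : sub v v. Proof. exact: connect0. Qed.

Lemma tb_trans u v w : sub u v -> sub v w -> sub u w.
Proof. by move=> H1 H2; apply: connect_trans H2 H1. Qed.

Lemma sub_pp (v : V) : sub (pp v) v. Proof. exact: fconnect1. Qed.

Lemma sub_rho_is (v : V) : sub v rho -> v = rho.
Proof. by case/subP => k <-; rewrite iter_pp_rho. Qed.

Lemma iter_periodic q v n r : iter q pp v = v -> iter (n * q + r) pp v = iter r pp v.
Proof.
move=> Hq; elim: n => [//|n IH].
by rewrite mulSn -addnA iterD IH -iterD addnC iterD Hq.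
Qed.

Lemma no_cycle c : c != rho -> ~~ sub c (pp c).
Proof.
move=> Hc; apply/negP => /subP [k Hk].
have Hper : iter k.+1 pp c = c by rewrite iterSr.
have Hnr : forall j, j <= k -> iter j pp c != rho.
  move=> j Hj; apply/negP => /eqP Hj'.
  have E : k.+1 = (k - j).+1 + j by rewrite addSn subnK.
  move: Hper; rewrite E iterD Hj' iter_pp_rho => Hcr.
  by rewrite Hcr eqxx in Hc.
have [K HK] := reach_pp c.
move: HK; rewrite (divn_eq K k.+1) iter_periodic //.
move=> HK; have := Hnr (K %% k.+1); rewrite -ltnS ltn_pmod // HK eqxx.
by move=> /(_ isT).
Qed.

Lemma pp_neq c : c != rho -> pp c != c.
Proof. by move=> Hc; apply: contraNneq (no_cycle Hc) => ->; apply: tb_refl. Qed.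

Lemma sub_child v c w : pp c = w -> sub v c = (c == v) || sub v w.
Proof.
move=> Hcw; apply/idP/idP.
  case/subP => [[|k]]; first by move=> /= ->; rewrite eqxx.
  by rewrite iterSr Hcw => H; apply/orP; right; apply/subP; exists k.
case/orP => [/eqP ->|H]; first exact: tb_refl.
by apply: tb_trans H _; rewrite -Hcw; apply: sub_pp.
Qed.

Lemma sub_step q w : sub q w -> w != q -> q != rho ->
  exists c, [/\ c != rho, pp c = q & sub c w].
Proof.
case/subP => [[|k]]; first by move=> /= ->; rewrite eqxx.
rewrite iterS => Hk _ Hq; exists (iter k pp w); split => //.
  by apply: contraNneq Hq => H; rewrite -Hk H pp_rho.
exact: fconnect_iter.
Qed.

Lemma sub_chain a b w : sub a w -> sub b w -> sub a b || sub b a.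
Proof.
case/subP => i <-; case/subP => j <-.
case: (leqP i j) => Hij.
  by apply/orP; right; apply/subP; exists (j - i); rewrite -iterD subnK.
by apply/orP; left; apply/subP; exists (i - j); rewrite -iterD subnK // ltnW.
Qed.

Lemma child_uniq q c1 c2 w : c1 != rho -> c2 != rho -> pp c1 = q -> pp c2 = q ->
  sub c1 w -> sub c2 w -> c1 = c2.
Proof.
move=> H1 H2 E1 E2 S1 S2; apply/eqP; apply: contraT => Hne.
case/orP: (sub_chain S1 S2) => H.
  move: H; rewrite (sub_child _ E2) eq_sym (negbTE Hne) /= -E1 => H.
  by move: (no_cycle H1); rewrite H.
move: H; rewrite (sub_child _ E1) (negbTE Hne) /= -E2 => H.
by move: (no_cycle H2); rewrite H.
Qed.

Lemma root_all v w : v != rho -> pp v = rho -> w != rho -> sub v w.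
Proof.
move=> Hv Ev Hw; have [k Hk] := reach_pp w.
elim: k w Hw Hk => [|k IH] w Hw; first by move=> /= E; rewrite E eqxx in Hw.
rewrite iterSr => Hk.
case: (eqVneq (pp w) rho) => Ew.
  case: Htree => _ /eqP/cards1P [r Hr].
  have Hin : forall u, u != rho -> pp u = rho -> u = r.
    move=> u Hu Eu; apply/set1P; rewrite -Hr inE Hu /= -(pp_par Hu) Eu eqxx //.
  by rewrite (Hin w Hw Ew) -(Hin v Hv Ev); apply: tb_refl.
by apply: tb_trans (IH _ Ew Hk) (sub_pp w).
Qed.

End TreeFacts.

Local Open Scope ring_scope.

Lemma sumZ1 (G : finZmodType) n (u : 'I_n.+1 -> G) :
  \sum_(i < n.+1 | (i.+1 < n.+1)%N) u i = \sum_(i < n) u (widen_ord (leqnSn n) i).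
Proof.
rewrite big_mkcond big_ord_recr /= ltnn addr0.
by apply: eq_bigr => i _; rewrite ltnS ltn_ord.
Qed.

Lemma sumZ2 (G : finZmodType) n (u : 'I_n.+1 -> G) :
  \sum_(i < n.+1 | (i.+1 == n.+1)%N) u i = u ord_max.
Proof.
rewrite big_mkcond big_ord_recr /= eqxx big1 ?add0r // => i _.
by rewrite eqSS ltn_eqF.
Qed.

Lemma fr_back (G : finZmodType) (Lab : finType) (L : G -> Lab) :
  friendly L -> forall m, (2 <= m)%N ->
  forall (g : {ffun 'I_m -> G}), Zm g ->
  forall i x, L x = L (g i) ->
  exists g' : {ffun 'I_m -> G}, [/\ Zm g', Ltilde L g' = Ltilde L g & g' i = x].
Proof.
move=> Hfr m Hm g Zg i x Hx.
case: (leqP 3 m) => H3.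
  have := Hfr m H3 (Ltilde L g) (ex_intro _ g (conj Zg erefl)) i x.
  case=> _ /(_ _) [|g' [Z1 Z2 Z3]]; first by rewrite ffunE.
  by exists g'.
have Em : m = 2%N by apply/eqP; rewrite eqn_leq Hm andbT -ltnS.
subst m.
have Eg : g ord0 = g ord_max.
  move: Zg; rewrite /Zm sumZ1 sumZ2 big_ord1 => /eqP <-; congr (g _); exact: val_inj.
exists [ffun => x]; split.
- by rewrite /Zm sumZ1 sumZ2 big_ord1 !ffunE.
- apply/ffunP => j; rewrite !ffunE Hx.
  have Hall : forall k : 'I_2, g k = g ord0.
    by case=> [[|[|//]] Hk]; [congr (g _); apply: val_inj | rewrite Eg; congr (g _); apply: val_inj].
  by rewrite !Hall.
- by rewrite ffunE.
Qed.

Section Star.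
Variables (V : finType) (rho : V) (par : V -> V).
Hypothesis Htree : is_root_edge_tree rho par.
Variables (G : finZmodType) (Lab : finType) (L : G -> Lab).
Hypothesis Hfr : friendly L.
Local Notation E := (edge rho).

Definition Cst (h : {ffun E -> G}) (w : E) : bool :=
  interior_vertex rho par (val w) ==>
    (h w == \sum_(f : E | child_edge par (val w) f) h f).

Lemma star (w : E) (h : {ffun E -> G}) :
  interior_vertex rho par (val w) -> Cst h w ->
  forall a : E, (a == w) || child_edge par (val w) a ->
  forall x, L x = L (h a) ->
  exists g : {ffun E -> G}, [/\ forall b, L (g b) = L (h b), g a = x &
     g w = \sum_(f : E | child_edge par (val w) f) g f].
Proof.
move=> Hint Hc a Ha x Hx.
move: Hc; rewrite /Cst Hint /= => /eqP Hc.
pose cs := [seq f <- index_enum E | child_edge par (val w) f].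
have Hcs : forall f, (f \in cs) = child_edge par (val w) f.
  by move=> f; rewrite mem_filter mem_index_enum andbT.
have Hu : uniq cs by rewrite filter_uniq // index_enum_uniq.
have Hwcs : w \notin cs.
  rewrite Hcs /child_edge; have := pp_neq Htree (valP w).
  by rewrite pp_par ?(valP w).
have Hsum : forall u : {ffun E -> G}, \sum_(f : E | child_edge par (val w) f) u f
    = \sum_(i < size cs) u (nth w cs i).
  by move=> u; rewrite -big_filter (big_nth w) big_mkord.
pose r := size cs.
have Hr : (1 <= r)%N.
  move: Hint => /andP [_ /existsP [f Hf]].
  by rewrite /r lt0n size_eq0; apply/eqP => E0; move: Hf; rewrite -Hcs E0.
pose t : {ffun 'I_r.+1 -> G} := [ffun i : 'I_r.+1 => if (i < r)%N then h (nth w cs i) else h w].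
have Zt : Zm t.
  rewrite /Zm sumZ1 sumZ2 ffunE ltnn Hc Hsum; apply/eqP.
  by apply: eq_bigr => i _; rewrite ffunE /= ltn_ord.
pose i0 : 'I_r.+1 := if a == w then ord_max else inord (index a cs).
have Hi0 : L x = L (t i0).
  rewrite /i0 Hx ffunE; case: eqP => [->|Haw]; first by rewrite /= ltnn.
  have Hacs : a \in cs by rewrite Hcs; move: Ha; case: eqP.
  rewrite inordK; last by rewrite ltnS ltnW // index_mem.
  by rewrite index_mem Hacs nth_index.
have [g' [Zg' Lg' Eg']] := @fr_back _ _ _ Hfr r.+1 Hr t Zt i0 x Hi0.
have Lg : forall i, L (g' i) = L (t i).
  by move=> i; have := congr1 (fun F : {ffun 'I_r.+1 -> Lab} => F i) Lg'; rewrite !ffunE.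
pose g := [ffun b => if b == w then g' ord_max
                     else if b \in cs then g' (inord (index b cs)) else h b].
exists g; split.
- move=> b; rewrite ffunE; case: eqP => [->|Hbw].
    by rewrite Lg ffunE ltnn.
  case: ifP => // Hb; rewrite Lg ffunE inordK; last by rewrite ltnS ltnW // index_mem.
  by rewrite index_mem Hb nth_index.
- rewrite ffunE -Eg' /i0; case Eaw: (a == w) => //.
  have -> : a \in cs by rewrite Hcs; move: Ha; rewrite Eaw.
  by [].
- rewrite Hsum ffunE eqxx.
  move/eqP: Zg'; rewrite sumZ1 sumZ2 => <-.
  apply: eq_bigr => i _; rewrite ffunE.
  have Hin : nth w cs i \in cs by rewrite mem_nth.
  have -> : (nth w cs i == w) = false by apply: contraNF Hwcs => /eqP <-.
  rewrite Hin index_uniq //; congr (g' _); apply: val_inj.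
  by rewrite /= inordK // ltnS ltnW.
Qed.

End Star.

Section DownUp.
Variables (V : finType) (rho : V) (par : V -> V).
Hypothesis Htree : is_root_edge_tree rho par.
Variables (G : finZmodType) (Lab : finType) (L : G -> Lab).
Hypothesis Hfr : friendly L.
Local Notation E := (edge rho).
Local Notation pp := (pp rho par).

Definition subE (v w : E) : bool := sub rho par (val v) (val w).
Definition childE (q c : E) : bool := child_edge par (val q) c.

Lemma childE_pp q c : childE q c = (pp (val c) == val q).
Proof. by rewrite /childE /child_edge (@pp_par _ rho par _ (valP c)). Qed.

Lemma subE_refl v : subE v v. Proof. exact: tb_refl. Qed.

Lemma subE_child v c w : childE w c -> subE v c = (c == v) || subE v w.
Proof.
rewrite childE_pp => /eqP H; rewrite /subE (sub_child _ H).
by congr (_ || _).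
Qed.

Lemma subE_trans u v w : subE u v -> subE v w -> subE u w.
Proof. exact: tb_trans. Qed.

Lemma no_cycleE q c : childE q c -> ~~ subE c q.
Proof. by rewrite childE_pp => /eqP H; rewrite /subE -H no_cycle // (valP c). Qed.

Lemma child_neq q c : childE q c -> c != q.
Proof. by move=> H; apply: contraNneq (no_cycleE H) => <-; apply: subE_refl. Qed.

Lemma pick_exists (q w : E) : subE q w -> w != q ->
  exists c, childE q c && subE c w.
Proof.
move=> Hs Hne; have Hne' : val w != val q by [].
have [c [Hc Ec Sc]] := sub_step Hs Hne' (valP q).
exists (exist _ c Hc); rewrite childE_pp /= Ec eqxx /=; exact: Sc.
Qed.

Lemma child_uniqE q c1 c2 w : childE q c1 -> childE q c2 -> subE c1 w -> subE c2 w ->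
  c1 = c2.
Proof.
rewrite !childE_pp => /eqP E1 /eqP E2 S1 S2; apply: val_inj.
exact: (child_uniq Htree (valP c1) (valP c2) E1 E2 S1 S2).
Qed.

Lemma pick_child (q c w : E) : childE q c -> subE c w ->
  [pick c' | childE q c' && subE c' w] = Some c.
Proof.
move=> Hc Sc; case: pickP => [c' /andP [H1 H2]|H].
  by congr Some; apply: (child_uniqE H1 Hc H2 Sc).
by move: (H c); rewrite Hc Sc.
Qed.

Lemma Cst_ext (h1 h2 : {ffun E -> G}) w : h1 w = h2 w ->
  (forall f, childE w f -> h1 f = h2 f) -> Cst par h1 w = Cst par h2 w.
Proof.
move=> Hw Hf; rewrite /Cst Hw; congr (_ ==> (_ == _)).
by apply: eq_bigr => f Hf'; apply: Hf.
Qed.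

Lemma down n : forall (v : E), (#|[set w : E | subE v w]| <= n)%N ->
  forall (h : {ffun E -> G}) x, L x = L (h v) -> (forall w, subE v w -> Cst par h w) ->
  exists h' : {ffun E -> G}, [/\ forall w, subE v w -> L (h' w) = L (h w), h' v = x &
     forall w, subE v w -> Cst par h' w].
Proof.
elim: n => [|n IH] v Hcard h x Hx Hc.
  by move: Hcard; rewrite leqn0 => /eqP/cards0_eq/setP/(_ v); rewrite !inE subE_refl.
have [g' [Lg' Eg' Sg']] : exists g' : {ffun E -> G}, [/\ forall b, L (g' b) = L (h b),
    g' v = x & interior_vertex rho par (val v) ->
      g' v = \sum_(f : E | child_edge par (val v) f) g' f].
  case Hint: (interior_vertex rho par (val v)).
    have [g [G1 G2 G3]] := @star _ _ _ Htree _ _ _ Hfr v h Hint (Hc v (subE_refl v)) v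
                              ltac:(by rewrite eqxx) x Hx.
    by exists g; split.
  exists [ffun b => if b == v then x else h b]; split => //.
  - by move=> b; rewrite ffunE; case: eqP => [->|].
  - by rewrite ffunE eqxx.
have Hfam : forall c : E, exists hc : {ffun E -> G}, childE v c ->
   [/\ forall w, subE c w -> L (hc w) = L (h w), hc c = g' c &
     forall w, subE c w -> Cst par hc w].
  move=> c; case Hvc: (childE v c); last by exists h.
  have Hsub : [set w : E | subE c w] \proper [set w : E | subE v w].
    apply/properP; split.
      apply/subsetP => w; rewrite !inE => Hw.
      by apply: subE_trans Hw; rewrite (subE_child _ Hvc) subE_refl orbT.
    by exists v; rewrite !inE ?subE_refl // (negbTE (no_cycleE Hvc)).
  have Hcard' : (#|[set w : E | subE c w]| <= n)%N.
    by rewrite -ltnS; apply: leq_trans (proper_card Hsub) Hcard.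
  have Svc : subE v c by rewrite (subE_child _ Hvc) subE_refl orbT.
  have [hc Hhc] := IH c Hcard' h (g' c) (Lg' c)
     (fun w Hw => Hc w (subE_trans Svc Hw)).
  by exists hc.
have [hs Hhs] := fin_all_exists Hfam.
pose h' := [ffun w => if w == v then x else
              if [pick c | childE v c && subE c w] is Some c then hs c w else h w].
have Hh'v : h' v = x by rewrite ffunE eqxx.
have Hh'c : forall c w, childE v c -> subE c w -> h' w = hs c w.
  move=> c w Hvc Scw; rewrite ffunE (pick_child Hvc Scw).
  case: eqP => // Ewv; subst w; by move: (no_cycleE Hvc); rewrite Scw.
exists h'; split => //.
- move=> w Sw; case: (eqVneq w v) => [->|Hwv]; first by rewrite Hh'v.
  have [c /andP [Hvc Scw]] := pick_exists Sw Hwv.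
  rewrite (Hh'c c w Hvc Scw); have [H1 _ _] := Hhs c Hvc; exact: H1.
- move=> w Sw; case: (eqVneq w v) => [->|Hwv].
    rewrite /Cst; apply/implyP => Hint; rewrite Hh'v -Eg' (Sg' Hint).
    apply/eqP; apply: eq_bigr => f Hf.
    have Hvf : childE v f by [].
    rewrite (Hh'c f f Hvf (subE_refl f)); have [_ H2 _] := Hhs f Hvf; by rewrite H2.
  have [c /andP [Hvc Scw]] := pick_exists Sw Hwv.
  have [_ _ H3] := Hhs c Hvc.
  rewrite (@Cst_ext h' (hs c)) ?H3 //; first exact: Hh'c.
  move=> f Hwf; apply: Hh'c => //.
  by rewrite (subE_child _ Hwf) Scw orbT.
Qed.

Lemma up k : forall (v : E), iter k pp (val v) = rho ->
  forall (h : {ffun E -> G}) x, L x = L (h v) -> (forall w, ~~ subE v w -> Cst par h w) ->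
  exists h' : {ffun E -> G}, [/\ forall w, ~~ subE v w -> L (h' w) = L (h w), h' v = x &
     forall w, ~~ subE v w -> Cst par h' w].
Proof.
elim: k => [|k IH] v Hk h x Hx Hc.
  by move: (valP v); move: Hk => /= ->; rewrite eqxx.
move: Hk; rewrite iterSr => Hk.
case: (eqVneq (pp (val v)) rho) => Hvr.
  exists [ffun b => if b == v then x else h b]; split.
  - by move=> w; rewrite /subE (root_all Htree (valP v) Hvr (valP w)).
  - by rewrite ffunE eqxx.
  - by move=> w; rewrite /subE (root_all Htree (valP v) Hvr (valP w)).
pose q : E := exist _ (pp (val v)) Hvr.
have Hqv : childE q v by rewrite childE_pp.
have Sqv : subE q v by rewrite (subE_child _ Hqv) subE_refl orbT.
have Hnq : ~~ subE v q by apply: no_cycleE.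
have Hint : interior_vertex rho par (val q).
  by rewrite /interior_vertex Hvr /=; apply/existsP; exists v.
have [g' [Lg' Eg' Sg']] := @star _ _ _ Htree _ _ _ Hfr q h Hint (Hc q Hnq) v
                              ltac:(by apply/orP; right) x Hx.
have Hcq : forall w, ~~ subE q w -> ~~ subE v w.
  by move=> w; apply: contra => Hw; apply: subE_trans Sqv Hw.
have [h1 [L1 E1 C1]] := IH q Hk h (g' q) (Lg' q) (fun w Hw => Hc w (Hcq w Hw)).
have Hfam : forall c : E, exists hc : {ffun E -> G}, childE q c -> c != v ->
   [/\ forall w, subE c w -> L (hc w) = L (h w), hc c = g' c &
     forall w, subE c w -> Cst par hc w].
  move=> c; case Hqc: (childE q c); last by exists h.
  case: (eqVneq c v) => [_|Hcv]; first by exists h.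
  have Hsv : forall w, subE c w -> ~~ subE v w.
    move=> w Scw; apply/negP => Svw.
    by move: Hcv; rewrite (child_uniqE Hqc Hqv Scw Svw) eqxx.
  have [hc Hhc] := down (leqnn #|[set w : E | subE c w]|) (Lg' c) (fun w Hw => Hc w (Hsv w Hw)).
  by exists hc.
have [hs Hhs] := fin_all_exists Hfam.
pose h' := [ffun w => if ~~ subE q w then h1 w else if w == q then g' q else
              if [pick c | childE q c && subE c w] is Some c then
                 (if c == v then (if w == v then x else h w) else hs c w)
              else h w].
have Hh'q : h' q = g' q by rewrite ffunE subE_refl eqxx.
have Hh'c : forall c w, childE q c -> c != v -> subE c w -> h' w = hs c w.
  move=> c w Hqc Hcv Scw; rewrite ffunE (subE_trans _ Scw); last first.
    by rewrite (subE_child _ Hqc) subE_refl orbT.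
  case: eqP => [Ewq|_].
    by subst w; move: (no_cycleE Hqc); rewrite Scw.
  by rewrite (pick_child Hqc Scw) (negbTE Hcv).
have Hh'v : h' v = x.
  rewrite ffunE Sqv /= (negbTE (child_neq Hqv)) (pick_child Hqv (subE_refl v)).
  by rewrite eqxx.
exists h'; split => //.
- move=> w Svw; case Sqw: (subE q w).
    case: (eqVneq w q) => [->|Hwq]; first by rewrite Hh'q.
    have [c /andP [Hqc Scw]] := pick_exists Sqw Hwq.
    have Hcv : c != v.
      by apply: contraNneq Svw => <-.
    rewrite (Hh'c c w Hqc Hcv Scw); have [H1 _ _] := Hhs c Hqc Hcv; exact: H1.
  by rewrite ffunE Sqw /=; apply: L1; rewrite Sqw.
- move=> w Svw; case Sqw: (subE q w).
    case: (eqVneq w q) => [->|Hwq].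
      rewrite /Cst; apply/implyP => _; rewrite Hh'q Sg'.
      apply/eqP; apply: eq_bigr => f Hf.
      have Hqf : childE q f by [].
      case: (eqVneq f v) => [->|Hfv]; first by rewrite Hh'v Eg'.
      rewrite (Hh'c f f Hqf Hfv (subE_refl f)); have [_ H2 _] := Hhs f Hqf Hfv; by rewrite H2.
    have [c /andP [Hqc Scw]] := pick_exists Sqw Hwq.
    have Hcv : c != v by apply: contraNneq Svw => <-.
    have [_ _ H3] := Hhs c Hqc Hcv.
    rewrite (@Cst_ext h' (hs c)) ?H3 //; first exact: Hh'c.
    move=> f Hwf; apply: Hh'c => //.
    by rewrite (subE_child _ Hwf) Scw orbT.
  rewrite (@Cst_ext h' h1); first by apply: C1; rewrite Sqw.
    by rewrite ffunE Sqw.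
  move=> f Hwf; case: (eqVneq f q) => [->|Hfq]; first by rewrite Hh'q E1.
  by rewrite ffunE (subE_child _ Hwf) (negbTE Hfq) Sqw.
Qed.

End DownUp.

Lemma toric_q (G : finZmodType) (Lab : finType) (L : G -> Lab)
  (V : finType) (rho : V) (par : V -> V) (lam : imT rho par L) :
  toric_map (qvar lam) = \prod_(e : edge rho) avar e (val lam e).
Proof.
rewrite /toric_map /qvar mmapX mmap1U enum_rankK //.
Qed.

Lemma toric_bin (G : finZmodType) (Lab : finType) (L : G -> Lab)
  (V : finType) (rho : V) (par : V -> V) (a b c d : imT rho par L) :
  toric_map (qvar a * qvar b - qvar c * qvar d) =
  toric_map (qvar a) * toric_map (qvar b) - toric_map (qvar c) * toric_map (qvar d).
Proof. by rewrite /toric_map rmorphB !rmorphM. Qed.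

Section Final.
Variables (V : finType) (rho : V) (par : V -> V).
Hypothesis Htree : is_root_edge_tree rho par.
Variables (G : finZmodType) (Lab : finType) (L : G -> Lab).
Hypothesis Hfr : friendly L.
Local Notation E := (edge rho).
Local Notation pp := (pp rho par).
Local Notation subE := (subE par).

Lemma belowb_fc (f e : E) : belowb par f e = fconnect par (val f) (val e).
Proof.
apply/existsP/idP => [[k /eqP <-]|H]; first exact: fconnect_iter.
have Hk : (findex par (val f) (val e) < #|V|.+1)%N.
  apply: leq_trans (findex_max H) _; apply: leq_trans (leqnSn _); exact: max_card.
by exists (Ordinal Hk); rewrite /= iter_findex.
Qed.

Lemma iter_alt k x : iter k par x = iter k pp x \/ fconnect par rho (iter k par x).
Proof.
elim: k => [|k [IH|IH]]; first by left.
  rewrite !iterS IH; case: (eqVneq (iter k pp x) rho) => H.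
    by right; rewrite H; apply: fconnect1.
  by left; rewrite pp_par.
by right; rewrite iterS; apply: connect_trans IH (fconnect1 _ _).
Qed.

Lemma fc_par_pp x y : y != rho -> ~~ fconnect par rho y ->
  fconnect par x y = fconnect pp x y.
Proof.
move=> Hy Hn; apply/idP/idP => H.
  have [k E0] : exists k, iter k par x = y by exists (findex par x y); exact: iter_findex H.
  case: (iter_alt k x) => [Ek|H'].
    by rewrite -E0 Ek; apply: fconnect_iter.
  by rewrite -E0 H' in Hn.
have [k E0] : exists k, iter k pp x = y by exists (findex pp x y); exact: iter_findex H.
rewrite -E0 -iter_pp_par ?E0 //; exact: fconnect_iter.
Qed.

Lemma cons_Cst (h : {ffun E -> G}) : consistent par h = [forall w, Cst par h w].
Proof. by []. Qed.

Lemma splice_ok (e : E) (lam1 lam2 : {ffun E -> Lab}) :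
  lam1 \in consistent_labelings rho par L -> lam2 \in consistent_labelings rho par L ->
  lam1 e = lam2 e -> splice par e lam1 lam2 \in consistent_labelings rho par L.
Proof.
rewrite !inE => /existsP [h1 /andP [C1 /eqP E1]] /existsP [h2 /andP [C2 /eqP E2]] Heq.
case Hre: (fconnect par rho (val e)).
  have -> : splice par e lam1 lam2 = lam1.
    apply/ffunP => f; rewrite ffunE belowb_fc.
    have [k Hk] := proj1 Htree (val f).
    have H1 := fconnect_iter par k (val f); rewrite Hk in H1.
    by rewrite (connect_trans H1 Hre).
  by apply/existsP; exists h1; rewrite C1 E1 eqxx.
have Hx : L (h1 e) = L (h2 e) by move: Heq; rewrite E1 E2 !ffunE.
have [k Hk] := reach_pp Htree (val e).
have C2' : forall w, ~~ subE e w -> Cst par h2 w.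
  by move=> w _; move: C2; rewrite cons_Cst => /forallP.
have C1' : forall w, Cst par h1 w by move: C1; rewrite cons_Cst => /forallP.
have [h'' [L'' E'' C'']] := up Htree Hfr Hk Hx (fun w Hw => C2' w Hw).
pose h := [ffun w => if subE e w then h1 w else h'' w].
apply/existsP; exists h; apply/andP; split.
  rewrite cons_Cst; apply/forallP => w; case Sw: (subE e w).
    rewrite (@Cst_ext _ _ _ _ h h1); first exact: C1'.
      by rewrite ffunE Sw.
    by move=> f Hf; rewrite ffunE (subE_child _ Hf) Sw orbT.
  rewrite (@Cst_ext _ _ _ _ h h''); first by apply: C''; rewrite Sw.
    by rewrite ffunE Sw.
  move=> f Hf; rewrite ffunE (subE_child _ Hf) Sw orbF.
  by case: eqP => [->|]; rewrite ?E''.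
apply/eqP/ffunP => f; rewrite !ffunE belowb_fc fc_par_pp ?(valP e) ?Hre //.
rewrite E1 E2 !ffunE.
change (fconnect pp (val f) (val e)) with (subE e f).
by case Sf: (subE e f) => //; rewrite L'' ?Sf.
Qed.

End Final.

Unset Implicit Arguments.

Theorem lemma4p2 (G : finZmodType) (Lab : finType) (L : G -> Lab)
  (V : finType) (rho : V) (par : V -> V) (e : edge rho)
  (lam1 lam2 : imT rho par L) :
  friendly L ->
  is_root_edge_tree rho par ->
  interior_edge par e ->
  val lam1 e = val lam2 e ->
  exists (H12 : splice par e (val lam1) (val lam2) \in consistent_labelings rho par L)
         (H21 : splice par e (val lam2) (val lam1) \in consistent_labelings rho par L),
    in_toric_ideal
      (qvar lam1 * qvar lam2
       - qvar (exist (fun lam => lam \in consistent_labelings rho par L) _ H12)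
         * qvar (exist (fun lam => lam \in consistent_labelings rho par L) _ H21)).
Proof.
move=> Hfr Htree _ Heq.
exists (splice_ok Htree Hfr (valP lam1) (valP lam2) Heq).
exists (splice_ok Htree Hfr (valP lam2) (valP lam1) (esym Heq)).
rewrite /in_toric_ideal toric_bin !toric_q /= -!big_split /=.
apply/eqP; rewrite subr_eq0; apply/eqP; apply: eq_bigr => f _.
rewrite !ffunE; case: (belowb par f e) => //; exact: mulrC.
Qed.
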